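(* Let $G(\lambda)\in\mathbb F(\lambda)^{p\times m}$, let $L(\lambda)$ be a strong block minimal bases linearization of $G(\lambda)$ as in the context, with transfer function matrix $\widehat G(\lambda)=\begin{bmatrix} M(\lambda)+\widehat K_2^TC(\lambda I_n-A)^{-1}B\widehat K_1 & K_2(\lambda)^T\\ K_1(\lambda) & 0\end{bmatrix}$. (a) If $h(\lambda)\in\mathcal N_r(G(\lambda))$ then $z(\lambda)=\begin{bmatrix}N_1(\lambda)^T\\ -\widehat N_2(\lambda)M(\lambda)N_1(\lambda)^T\end{bmatrix}h(\lambda)\in\mathcal N_r(\widehat G(\lambda))$. Moreover, if $h(\lambda)\ne0$ is a vector polynomial, then $z(\lambda)$ is a vector polynomial and $\deg z(\lambda)=\deg(N_1(\lambda)^Th(\lambda))=\deg N_1(\lambda)+\deg h(\lambda)$. (b) If $\{h_1(\lambda),\dots,h_l(\lambda)\}$ is a right minimal basis of $G(\lambda)$, then $\left\{\begin{bmatrix}N_1(\lambda)^T\\ -\widehat N_2(\lambda)M(\lambda)N_1(\lambda)^T\end{bmatrix}h_j(\lambda)\right\}_{j=1}^l$ is a right minimal basis of $\widehat G(\lambda)$.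
   Context: $\mathbb F$ is an arbitrary field. A polynomial matrix $K\in\mathbb F[\lambda]^{a\times b}$, $a<b$, is a minimal basis if its rows form a minimal basis (polynomial basis of least total degree) of the subspace of $\mathbb F(\lambda)^b$ they span; $K\in\mathbb F[\lambda]^{a_1\times b}$, $N\in\mathbb F[\lambda]^{a_2\times b}$ are dual minimal bases if both are minimal bases, $a_1+a_2=b$ and $KN^T=0$. Strong block minimal bases linearization: write $G=D+C(\lambda I_n-A)^{-1}B$ with $D$ the polynomial part, $\deg D>1$, and $C(\lambda I_n-A)^{-1}B$ a minimal order state-space realization of the strictly proper part ($n$ minimal). Let $K_1\in\mathbb F[\lambda]^{\widehat m\times(m+\widehat m)}$, $K_2\in\mathbb F[\lambda]^{\widehat p\times(p+\widehat p)}$ be minimal bases with all row degrees $1$, $N_1\in\mathbb F[\lambda]^{m\times(m+\widehat m)}$, $N_2\in\mathbb F[\lambda]^{p\times(p+\widehat p)}$ minimal bases dual to $K_1,K_2$ respectively, each with all its row degrees equal, and $M(\lambda)\in\mathbb F[\lambda]^{(p+\widehat p)\times(m+\widehat m)}$ a pencil with $D=N_2MN_1^T$ and $\deg D=\deg N_1+\deg N_2+1$. Let $\widehat K_1\in\mathbb F^{m\times(m+\widehat m)}$, $\widehat K_2\in\mathbb F^{p\times(p+\widehat p)}$, $\widehat N_1\in\mathbb F[\lambda]^{\widehat m\times(m+\widehat m)}$, $\widehat N_2\in\mathbb F[\lambda]^{\widehat p\times(p+\widehat p)}$ be such that $U_i=\begin{bmatrix}K_i\\ \widehat K_i\end{bmatrix}$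 is unimodular with $U_i^{-1}=\begin{bmatrix}\widehat N_i^T & N_i^T\end{bmatrix}$, $i=1,2$. For nonsingular $T,S\in\mathbb F^{n\times n}$, $L(\lambda)=\begin{bmatrix}T(\lambda I_n-A)S & TB\widehat K_1 & 0\\ -\widehat K_2^TCS & M(\lambda) & K_2(\lambda)^T\\ 0 & K_1(\lambda) & 0\end{bmatrix}$. A right minimal basis of a rational matrix $G$ is a polynomial matrix (or set of vectors) whose columns form a minimal basis of $\mathcal N_r(G)=\{x:Gx=0\}$. *)

(* Defs.v *)
From HB Require Import structures.
From mathcomp Require Import all_boot all_order all_algebra.
Set Implicit Arguments. Unset Strict Implicit. Unset Printing Implicit Defensive.
Import Order.TTheory GRing.Theory Num.Theory.
Local Open Scope ring_scope.

Section Defs.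
Variable F : fieldType.

Definition ratF := {fraction {poly F}}.
Definition pQ (x : {poly F}) : ratF := FracField.tofrac x.

Definition mxQ a b (A : 'M[{poly F}]_(a, b)) : 'M[ratF]_(a, b) := map_mx pQ A.
Definition mxFP a b (A : 'M[F]_(a, b)) : 'M[{poly F}]_(a, b) := map_mx polyC A.
Definition mxFQ a b (A : 'M[F]_(a, b)) : 'M[ratF]_(a, b) := mxQ (mxFP A).

(* degree of a polynomial (deg 0 := 0) *)
Definition pdeg (q : {poly F}) : nat := (size q).-1.
Definition rowdeg a b (K : 'M[{poly F}]_(a, b)) (i : 'I_a) : nat :=
  \max_(j < b) pdeg (K i j).
Definition pmxdeg a b (K : 'M[{poly F}]_(a, b)) : nat :=
  \max_(i < a) rowdeg K i.
Definition totdeg a b (K : 'M[{poly F}]_(a, b)) : nat :=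
  \sum_(i < a) rowdeg K i.

Definition minimal_basis_of k a b (S : 'M[ratF]_(k, b)) (K : 'M[{poly F}]_(a, b)) :=
  [/\ row_free (mxQ K), (mxQ K :=: S)%MS &
      forall K' : 'M[{poly F}]_(a, b),
        row_free (mxQ K') -> (mxQ K' :=: S)%MS -> (totdeg K <= totdeg K')%N].

Definition minimal_basis a b (K : 'M[{poly F}]_(a, b)) :=
  minimal_basis_of (mxQ K) K.

Definition dual_minimal_bases a1 a2 b (K : 'M[{poly F}]_(a1, b))
  (N : 'M[{poly F}]_(a2, b)) :=
  [/\ minimal_basis K, minimal_basis N, (a1 + a2)%N = b & K *m N^T = 0].

(* right null space N_r(G) = {x : G x = 0}, represented (as a row space of
   transposed vectors) by kermx G^T *)
Definition rnull p m (G : 'M[ratF]_(p, m)) : 'M[ratF]_m := kermx G^T.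

Definition right_minimal_basis p m l (G : 'M[ratF]_(p, m))
  (H : 'M[{poly F}]_(m, l)) := minimal_basis_of (rnull G) H^T.

Definition lamIA n (A : 'M[F]_n) : 'M[ratF]_n :=
  mxQ ('X *: 1%:M - mxFP A).
Definition ssreal n p m (A : 'M[F]_n) (B : 'M[F]_(n, m)) (C : 'M[F]_(p, n))
  : 'M[ratF]_(p, m) := mxFQ C *m invmx (lamIA A) *m mxFQ B.

Definition minimal_realization n p m (A : 'M[F]_n) (B : 'M[F]_(n, m))
  (C : 'M[F]_(p, n)) :=
  forall n' (A' : 'M[F]_n') (B' : 'M[F]_(n', m)) (C' : 'M[F]_(p, n')),
    ssreal A' B' C' = ssreal A B C -> (n <= n')%N.

Definition unimodular_completion a c (K : 'M[{poly F}]_(a, c + a))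
  (Kh : 'M[F]_(c, c + a)) (Nh : 'M[{poly F}]_(a, c + a))
  (N : 'M[{poly F}]_(c, c + a)) :=
  col_mx K (mxFP Kh) *m row_mx Nh^T N^T = 1%:M /\
  row_mx Nh^T N^T *m col_mx K (mxFP Kh) = 1%:M.

Definition Ghat n p m ph mh (A : 'M[F]_n) (B : 'M[F]_(n, m)) (C : 'M[F]_(p, n))
  (M : 'M[{poly F}]_(p + ph, m + mh)) (K1 : 'M[{poly F}]_(mh, m + mh))
  (K2 : 'M[{poly F}]_(ph, p + ph)) (K1h : 'M[F]_(m, m + mh))
  (K2h : 'M[F]_(p, p + ph)) : 'M[ratF]_(p + ph + mh, m + mh + ph) :=
  block_mx (mxQ M + mxFQ K2h^T *m ssreal A B C *m mxFQ K1h) (mxQ K2^T)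
           (mxQ K1) 0.

Definition Zmx p m ph mh (M : 'M[{poly F}]_(p + ph, m + mh))
  (N1 : 'M[{poly F}]_(m, m + mh)) (N2h : 'M[{poly F}]_(ph, p + ph))
  : 'M[{poly F}]_(m + mh + ph, m) :=
  col_mx N1^T (- (N2h *m M *m N1^T)).

End Defs.

(* Main.v *)
Require Import Defs.
From HB Require Import structures.
From mathcomp Require Import all_boot all_order all_algebra zify.
From mathcomp Require Import fingroup perm.
Import GRing.Theory.
Set Implicit Arguments. Unset Strict Implicit. Unset Printing Implicit Defensive.
Local Open Scope ring_scope.



Section MxQ.
Variable F : fieldType.
Local Notation pQ := (@pQ F).

Lemma pQ_inj : injective pQ.
Proof. by move=> x y /eqP; rewrite /pQ tofrac_eq => /eqP. Qed.
Lemma pQM x y : pQ (x * y) = pQ x * pQ y. Proof. exact: rmorphM. Qed.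
Lemma pQD x y : pQ (x + y) = pQ x + pQ y. Proof. exact: rmorphD. Qed.
Lemma pQN x : pQ (- x) = - pQ x. Proof. exact: rmorphN. Qed.
Lemma pQ0 : pQ 0 = 0. Proof. exact: rmorph0. Qed.
Lemma pQ1 : pQ 1 = 1. Proof. exact: rmorph1. Qed.

Lemma mxQ_inj a b : injective (@mxQ F a b).
Proof. move=> X Y e; apply/matrixP=> i j; apply: pQ_inj.
by have := congr1 (fun Z : 'M_(a, b) => Z i j) e; rewrite !mxE. Qed.
Lemma mxQM a b c (X : 'M[{poly F}]_(a, b)) (Y : 'M[{poly F}]_(b, c)) : mxQ (X *m Y) = mxQ X *m mxQ Y.
Proof. exact: map_mxM. Qed.
Lemma mxQD a b (X Y : 'M[{poly F}]_(a, b)) : mxQ (X + Y) = mxQ X + mxQ Y.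
Proof. exact: map_mxD. Qed.
Lemma mxQN a b (X : 'M[{poly F}]_(a, b)) : mxQ (- X) = - mxQ X.
Proof. exact: map_mxN. Qed.
Lemma mxQ0 a b : mxQ (0 : 'M[{poly F}]_(a, b)) = 0.
Proof. exact: map_mx0. Qed.
Lemma mxQ1 a : mxQ (1%:M : 'M[{poly F}]_a) = 1%:M.
Proof. exact: map_mx1. Qed.
Lemma mxQT a b (X : 'M[{poly F}]_(a, b)) : mxQ X^T = (mxQ X)^T.
Proof. by rewrite /mxQ map_trmx. Qed.
Lemma mxQ_col a1 a2 b (X : 'M[{poly F}]_(a1, b)) (Y : 'M[{poly F}]_(a2, b)) : mxQ (col_mx X Y) = col_mx (mxQ X) (mxQ Y).
Proof. exact: map_col_mx. Qed.
Lemma mxQ_row a b1 b2 (X : 'M[{poly F}]_(a, b1)) (Y : 'M[{poly F}]_(a, b2)) : mxQ (row_mx X Y) = row_mx (mxQ X) (mxQ Y).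
Proof. exact: map_row_mx. Qed.
Lemma mxFQT a b (X : 'M[F]_(a, b)) : mxFQ X^T = (mxFQ X)^T.
Proof. by rewrite /mxFQ /mxFP -map_trmx mxQT. Qed.
Lemma mxQ_det a (X : 'M[{poly F}]_a) : \det (mxQ X) = pQ (\det X).
Proof. exact: det_map_mx. Qed.
Lemma mxQ_adj a (X : 'M[{poly F}]_a) : \adj (mxQ X) = mxQ (\adj X).
Proof. by rewrite /mxQ -map_mx_adj. Qed.
End MxQ.



Section Deg.
Variable F : fieldType.
Implicit Types p q : {poly F}.

Lemma pdeg_le p k : (pdeg p <= k)%N = (size p <= k.+1)%N.
Proof. by rewrite /pdeg; case: (size p). Qed.

Lemma pdegN p : pdeg (- p) = pdeg p.
Proof. by rewrite /pdeg size_polyN. Qed.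

Lemma pdegD p q k : (pdeg p <= k)%N -> (pdeg q <= k)%N -> (pdeg (p + q) <= k)%N.
Proof.
rewrite !pdeg_le => hp hq; apply: leq_trans (size_polyD _ _) _.
by rewrite geq_max hp hq.
Qed.

Lemma pdegM p q : (pdeg (p * q) <= pdeg p + pdeg q)%N.
Proof.
have [->|p0] := eqVneq p 0; first by rewrite mul0r /pdeg size_poly0.
have [->|q0] := eqVneq q 0; first by rewrite mulr0 /pdeg size_poly0.
rewrite /pdeg size_mul //.
have := size_poly_gt0 p; have := size_poly_gt0 q; rewrite p0 q0.
move: (size p) (size q) => [|a] [|b] //= _ _.
by rewrite addnS /=.
Qed.

Lemma pdeg_sum (I : finType) (P : pred I) (G : I -> {poly F}) k :
  (forall i, P i -> pdeg (G i) <= k)%N -> (pdeg (\sum_(i | P i) G i) <= k)%N.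
Proof.
move=> h; elim/big_rec: _ => [|i x Pi hx]; first by rewrite /pdeg size_poly0.
exact: pdegD (h _ Pi) hx.
Qed.

Lemma pdegC (c : F) : pdeg c%:P = 0%N.
Proof. by rewrite /pdeg size_polyC; case: (c != 0). Qed.

Lemma rowdeg_leP a b (A : 'M[{poly F}]_(a, b)) i k :
  reflect (forall j, pdeg (A i j) <= k)%N (rowdeg A i <= k)%N.
Proof. by apply: (iffP (@bigmax_leqP _ xpredT k (fun j => pdeg (A i j)))) => h j //; apply: h. Qed.

Lemma rowdeg_ge a b (A : 'M[{poly F}]_(a, b)) i j : (pdeg (A i j) <= rowdeg A i)%N.
Proof. by move/rowdeg_leP: (leqnn (rowdeg A i)). Qed.

Lemma pmxdeg_leP a b (A : 'M[{poly F}]_(a, b)) k :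
  reflect (forall i j, pdeg (A i j) <= k)%N (pmxdeg A <= k)%N.
Proof.
apply: (iffP (@bigmax_leqP _ xpredT k (fun i => rowdeg A i))) => h i.
  by move=> j; apply/rowdeg_leP/h.
by move=> _; apply/rowdeg_leP/h.
Qed.

Lemma pmxdeg_ge a b (A : 'M[{poly F}]_(a, b)) i j : (pdeg (A i j) <= pmxdeg A)%N.
Proof. by move/pmxdeg_leP: (leqnn (pmxdeg A)). Qed.

Lemma rowdeg_le_pmxdeg a b (A : 'M[{poly F}]_(a, b)) i : (rowdeg A i <= pmxdeg A)%N.
Proof. by apply/rowdeg_leP=> j; apply: pmxdeg_ge. Qed.

Lemma pmxdegD a b (A B : 'M[{poly F}]_(a, b)) k :
  (pmxdeg A <= k)%N -> (pmxdeg B <= k)%N -> (pmxdeg (A + B) <= k)%N.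
Proof.
move=> /pmxdeg_leP hA /pmxdeg_leP hB; apply/pmxdeg_leP=> i j.
by rewrite mxE; apply: pdegD.
Qed.

Lemma pmxdegN a b (A : 'M[{poly F}]_(a, b)) : pmxdeg (- A) = pmxdeg A.
Proof.
apply/eqP; rewrite eqn_leq; apply/andP; split; apply/pmxdeg_leP=> i j;
  rewrite ?mxE ?pdegN; first exact: pmxdeg_ge.
by have := pmxdeg_ge (- A)%R i j; rewrite mxE pdegN.
Qed.

Lemma pmxdegM a b c (A : 'M[{poly F}]_(a, b)) (B : 'M[{poly F}]_(b, c)) :
  (pmxdeg (A *m B) <= pmxdeg A + pmxdeg B)%N.
Proof.
apply/pmxdeg_leP=> i j; rewrite mxE; apply: pdeg_sum => k _.
apply: leq_trans (pdegM _ _) _; exact: leq_add (pmxdeg_ge _ _ _) (pmxdeg_ge _ _ _).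
Qed.

Lemma pmxdegFP a b (X : 'M[F]_(a, b)) : pmxdeg (mxFP X) = 0%N.
Proof. by apply/eqP; rewrite -leqn0; apply/pmxdeg_leP=> i j; rewrite mxE pdegC. Qed.

Lemma pmxdeg_col a1 a2 b (A : 'M[{poly F}]_(a1, b)) (B : 'M[{poly F}]_(a2, b)) :
  pmxdeg (col_mx A B) = maxn (pmxdeg A) (pmxdeg B).
Proof.
apply/eqP; rewrite eqn_leq geq_max; apply/andP; split; [|apply/andP; split].
- apply/pmxdeg_leP=> i j; rewrite mxE; case: splitP => k _.
    exact: leq_trans (pmxdeg_ge _ _ _) (leq_maxl _ _).
  exact: leq_trans (pmxdeg_ge _ _ _) (leq_maxr _ _).
- apply/pmxdeg_leP=> i j; have := pmxdeg_ge (col_mx A B) (lshift a2 i) j.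
  by rewrite col_mxEu.
- apply/pmxdeg_leP=> i j; have := pmxdeg_ge (col_mx A B) (rshift a1 i) j.
  by rewrite col_mxEd.
Qed.

Lemma pmxdeg0 a b : pmxdeg (0 : 'M[{poly F}]_(a, b)) = 0%N.
Proof. by apply/eqP; rewrite -leqn0; apply/pmxdeg_leP=> i j; rewrite mxE /pdeg size_poly0. Qed.
Lemma rowdegE a b (A : 'M[{poly F}]_(a, b)) i : rowdeg A i = pmxdeg (row i A)^T.
Proof.
apply/eqP; rewrite eqn_leq; apply/andP; split.
  by apply/rowdeg_leP=> j; have := pmxdeg_ge (row i A)^T j 0; rewrite !mxE.
by apply/pmxdeg_leP=> j k; rewrite !mxE rowdeg_ge.
Qed.
End Deg.



Section RowRed.
Variable F : fieldType.
Implicit Types p q : {poly F}.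

Lemma coefM_top p q d e : (size p <= d.+1)%N -> (size q <= e.+1)%N ->
  (p * q)`_(d + e) = p`_d * q`_e.
Proof.
move=> hp hq; rewrite coefM.
have hd : (d < (d + e).+1)%N by lia.
rewrite (bigD1 (Ordinal hd)) //= big1 ?addr0; first by rewrite addKn.
move=> [j hj] /= hne; have {}hne : j != d by apply: contra hne => /eqP e1; apply/eqP/val_inj.
have [ltjd|ltdj] := ltnP j d.
  by rewrite [q`__]nth_default ?mulr0 //; apply: leq_trans hq _; lia.
by rewrite [p`__]nth_default ?mul0r //; apply: leq_trans hp _; move: hne ltdj; rewrite neq_ltn; case/orP; lia.
Qed.

Lemma size_drop p d : (size p <= d.+1)%N -> p`_d = 0 -> (size p <= d)%N.
Proof.
move=> h1 h2; rewrite leqNgt; apply/negP => h3.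
have hs : size p = d.+1 by lia.
have : lead_coef p == 0 by rewrite lead_coefE hs /= h2.
by rewrite lead_coef_eq0 => /eqP p0; move: hs; rewrite p0 size_poly0.
Qed.

Lemma top_coef_nz a (y : 'cV[{poly F}]_a) : y != 0 ->
  exists i, (y i 0)`_(pmxdeg y) != 0.
Proof.
move=> y0; apply/existsP; apply: contraNT y0; rewrite negb_exists => /forallP h.
have hs : forall i, (size (y i ord0) <= pmxdeg y)%N.
  move=> i; apply: size_drop; first by rewrite -pdeg_le pmxdeg_ge.
  by apply/eqP; have := h i; rewrite negbK.
case e: (pmxdeg y) hs => [|e'] hs.
  apply/eqP/matrixP=> i j; rewrite (ord1 j) mxE; apply/eqP.
  by rewrite -size_poly_eq0 -leqn0 hs.
have : (pmxdeg y <= e')%N.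
  by apply/pmxdeg_leP=> i j; rewrite (ord1 j) pdeg_le hs.
by rewrite e ltnn.
Qed.

Lemma rowE_free a b (X : 'M[ratF F]_(a, b)) i : row_free X -> row i X != 0.
Proof.
move=> fX; rewrite rowE; apply/negP; rewrite (mulmx_free_eq0 _ fX) => /eqP /matrixP /(_ 0 i).
by rewrite !mxE !eqxx /= => /eqP; rewrite oner_eq0.
Qed.

Lemma rowred a b d (K : 'M[{poly F}]_(a, b)) : minimal_basis K ->
  (forall i, rowdeg K i = d) -> forall y : 'cV[{poly F}]_a, y != 0 ->
  pmxdeg (K^T *m y) = (d + pmxdeg y)%N.
Proof.
move=> [fK _ minK] hd y y0.
have hKd : forall i j, (size (K i j) <= d.+1)%N.
  by move=> i j; rewrite -pdeg_le -(hd i) rowdeg_ge.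
apply/eqP; rewrite eqn_leq; apply/andP; split.
  apply: leq_trans (pmxdegM _ _) _; rewrite leq_add2r.
  by apply/pmxdeg_leP=> i j; rewrite mxE pdeg_le.
rewrite leqNgt; apply/negP => hlt.
set e := pmxdeg y.
pose c : 'rV[F]_a := \row_i (y i 0)`_e.
pose Kd : 'M[F]_(a, b) := \matrix_(i, j) (K i j)`_d.
have cKd : c *m Kd = 0.
  apply/matrixP=> i0 j; rewrite (ord1 i0) !mxE.
  have : (size ((K^T *m y) j ord0) <= d + e)%N.
    have := leq_ltn_trans (pmxdeg_ge (K^T *m y) j ord0) hlt.
    by rewrite /pdeg; case: (size _).
  move=> hs; transitivity ((K^T *m y) j ord0)`_(d + e); last by rewrite nth_default.
  rewrite mxE coef_sum; apply: eq_bigr => k _; rewrite !mxE coefM_top ?hKd //; first by rewrite mulrC.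
  by rewrite -pdeg_le pmxdeg_ge.
have [i0 ci0] := top_coef_nz y0.
have ci0' : c 0 i0 != 0 by rewrite mxE.
pose P : 'M[F]_a := \matrix_(i, j) if i == i0 then c 0 j else (i == j)%:R.
have Pu : P \in unitmx.
  rewrite -row_free_unit -kermx_eq0; apply/eqP.
  have kP := mulmx_ker P; set Kr := kermx P in kP *.
  have Pi0 : forall j, P i0 j = c 0 j by move=> j; rewrite mxE eqxx.
  have Pij : forall i j, i != i0 -> P i j = (i == j)%:R.
    by move=> i j ni; rewrite mxE (negPf ni).
  apply/matrixP=> r k; rewrite [X in _ = X]mxE.
  have ent : forall j, (Kr *m P) r j = Kr r i0 * c 0 j + (if j == i0 then 0 else Kr r j).
    move=> j; rewrite mxE (bigD1 i0) //= Pi0; congr (_ + _).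
    case: eqP => [->|/eqP nj].
      by rewrite big1 // => k' nk; rewrite Pij // (negPf nk) mulr0.
    rewrite (bigD1 j) ?(negbTE nj) //= 1?eq_sym //= big1 ?addr0; last first.
      by move=> k' /andP[nk nkj]; rewrite Pij // (negPf nkj) mulr0.
    by rewrite Pij // eqxx mulr1.
  have h0 : Kr r i0 = 0.
    have := ent i0; rewrite kP [X in X = _]mxE eqxx addr0 => /esym /eqP.
    by rewrite mulf_eq0 (negPf ci0') orbF => /eqP.
  have := ent k; rewrite kP h0 mul0r add0r [X in X = _]mxE.
  by case: eqP => [->|_ <-].
pose K' := mxFP P *m K.
have eqK : (mxQ K' :=: mxQ K)%MS.
  rewrite /K' mxQM; apply: eqmxMfull; rewrite row_full_unit.
  by rewrite unitmxE /mxQ /mxFQ /mxFP !det_map_mx unitfE /pQ tofrac_eq0 polyC_eq0 -unitfE -unitmxE.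
have fK' : row_free (mxQ K') by rewrite /row_free eqK.
have hle := minK K' fK' eqK.
have Kent : forall i j, K' i j = if i == i0 then \sum_k (c 0 k)%:P * K k j else K i j.
  move=> i j; rewrite mxE; case: eqP => [->|/eqP ni].
    by apply: eq_bigr => k _; rewrite !mxE eqxx.
  rewrite (bigD1 i) //= big1 ?addr0; first by rewrite !mxE (negPf ni) eqxx mul1r.
  by move=> k nk; rewrite !mxE (negPf ni) eq_sym (negPf nk) mul0r.
have top0 : forall j, (size (K' i0 j) <= d)%N.
  move=> j; rewrite Kent eqxx; apply: size_drop.
    rewrite -pdeg_le; apply: pdeg_sum => k _; apply: leq_trans (pdegM _ _) _.
    by rewrite pdegC add0n pdeg_le.
  rewrite coef_sum; transitivity ((c *m Kd) 0 j); last by rewrite cKd mxE.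
  by rewrite [RHS]mxE; apply: eq_bigr => k _; rewrite coefCM [Kd _ _]mxE.
clear hlt cKd; case: d hd hKd top0 hle Kd => [|d] hd hKd top0 hle Kd.
  have : row i0 (mxQ K') == 0.
    apply/eqP/matrixP=> i j; rewrite [in LHS]mxE /mxQ [in LHS]mxE [in RHS]mxE.
    by have := top0 j; rewrite leqn0 size_poly_eq0 => /eqP ->; rewrite /pQ tofrac0.
  by rewrite (negPf (rowE_free i0 fK')).
move: hle; apply/negP; rewrite -ltnNge /totdeg.
rewrite (bigD1 i0) //= [X in (_ < X)%N](bigD1 i0) //=.
have -> : \sum_(i < a | i != i0) rowdeg K' i = \sum_(i < a | i != i0) rowdeg K i.
  apply: eq_bigr => i ni; apply/eqP; rewrite eqn_leq; apply/andP; split.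
    by apply/rowdeg_leP=> j; rewrite Kent (negPf ni) rowdeg_ge.
  by apply/rowdeg_leP=> j; have := rowdeg_ge K' i j; rewrite Kent (negPf ni).
rewrite ltn_add2r hd; apply/rowdeg_leP => j.
by rewrite pdeg_le; apply: leq_trans (top0 j) _.
Qed.
Lemma rowT_nz a b (X : 'M[{poly F}]_(a, b)) i : row_free (mxQ X) -> (row i X)^T != 0.
Proof.
move=> fX; have := rowE_free i fX; apply: contra => /eqP h.
by rewrite /mxQ -map_row -[row i X]trmxK h trmx0 -/(mxQ _) mxQ0.
Qed.
End RowRed.



Section Real.
Variable F : fieldType.

Lemma sizeM_le_l (p q : {poly F}) : (size p <= 1)%N -> (size (p * q)%R <= size q)%N.
Proof.
move=> hp; apply: leq_trans (size_polyMleq _ _) _; move: hp.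
by case: (size p) => [|[|]] //=; case: (size q).
Qed.

Lemma sizeM_le_r (p q : {poly F}) : (size q <= 1)%N -> (size (p * q)%R <= size p)%N.
Proof. by rewrite mulrC; apply: sizeM_le_l. Qed.

Lemma lamIA_E n (A : 'M[F]_n) : lamIA A = mxQ (char_poly_mx A).
Proof. by rewrite /lamIA scalemx1. Qed.

Lemma size_cpmx n (A : 'M[F]_n) i j : (size (char_poly_mx A i j) <= 2)%N.
Proof.
rewrite !mxE; case: eqP => _; first by rewrite mulr1n size_XsubC.
by rewrite mulr0n sub0r size_polyN size_polyC; case: (_ != 0).
Qed.

Lemma size_adj_cpmx n (A : 'M[F]_n) i j : (size (\adj (char_poly_mx A) i j) <= n)%N.
Proof.
rewrite mxE expand_cofactor; apply: leq_trans (size_sum _ _ _) _.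
apply/bigmax_leqP => s _; rewrite size_Msign.
apply: leq_trans (size_poly_prod_leq _ _) _.
set c := #|[pred k | j != k]|.
have hc : (c.+1 <= n)%N.
  have : c = n.-1 by rewrite /c; transitivity #|predC1 j|; [apply: eq_card => k; rewrite !inE eq_sym | rewrite cardC1 card_ord].
  by move=> ->; case: n i j {A s c} => [[]|].
have hs : (\sum_(k | j != k) size (char_poly_mx A k (s k)) <= c * 2)%N.
  rewrite -sum_nat_const; apply: leq_sum => k _; exact: size_cpmx.
apply: leq_trans (leq_sub2r c (_ : _ <= (c * 2).+1)%N) _; first by rewrite ltnS.
lia.
Qed.

Lemma real_bound n p m (A : 'M[F]_n) (B : 'M[F]_(n, m)) (C : 'M[F]_(p, n))
  (D : 'M[{poly F}]_(p, m)) (h : 'cV[{poly F}]_m) :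
  (mxQ D + ssreal A B C) *m mxQ h = 0 -> (pmxdeg (D *m h) <= pmxdeg h)%N.
Proof.
move=> H.
set P := char_poly_mx A.
set chi := char_poly A.
have chi0 : chi != 0 by apply: monic_neq0; apply: char_poly_monic.
have Pu : mxQ P \in unitmx.
  by rewrite unitmxE unitfE mxQ_det /pQ tofrac_eq0.
set Q0 := mxFP C *m \adj P *m mxFP B *m h.
have eq1 : ssreal A B C *m mxQ h = (pQ chi)^-1 *: mxQ Q0.
  rewrite /ssreal lamIA_E /invmx Pu mxQ_det mxQ_adj.
  by rewrite /Q0 !mxQM -scalemxAr -!scalemxAl.
have eq2 : mxQ (D *m h) = - ((pQ chi)^-1 *: mxQ Q0).
  by rewrite -eq1 mxQM; apply/eqP; rewrite -subr_eq0 opprK -mulmxDl H.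
set e := pmxdeg h.
have hsQ : forall i j, (size (Q0 i j) <= n + e)%N.
  move=> i j; rewrite mxE; apply: leq_trans (size_sum _ _ _) _.
  apply/bigmax_leqP => k _; apply: leq_trans (size_polyMleq _ _) _.
  have hk : (size ((mxFP C *m \adj P *m mxFP B) i k) <= n)%N.
    rewrite mxE; apply: leq_trans (size_sum _ _ _) _.
    apply/bigmax_leqP => k' _; apply: leq_trans (sizeM_le_r _ _) _.
      by rewrite mxE size_polyC leq_b1.
    rewrite mxE; apply: leq_trans (size_sum _ _ _) _.
    apply/bigmax_leqP => k'' _; apply: leq_trans (sizeM_le_l _ _) _.
      by rewrite mxE size_polyC leq_b1.
    exact: size_adj_cpmx.
  have hh : (size (h k j) <= e.+1)%N by rewrite -pdeg_le pmxdeg_ge.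
  by have := leq_add hk hh; rewrite addnS; case: (_ + _)%N.
apply/pmxdeg_leP => i j.
set x := (D *m h) i j.
have [->|x0] := eqVneq x 0; first by rewrite /pdeg size_poly0.
have ex : chi * x = - Q0 i j.
  apply: pQ_inj; rewrite pQM /x.
  have := congr1 (fun M : 'M_(p, 1) => M i j) eq2; rewrite !mxE => ->.
  rewrite pQN mulrN mulrA mulfV; first by rewrite mul1r.
  by rewrite /pQ tofrac_eq0.
have := hsQ i j; rewrite -size_polyN -ex size_mul ?chi0 ?x0 // size_char_poly.
by rewrite pdeg_le addSn /= leq_add2l => /leqW.
Qed.
End Real.



Lemma zab (V : zmodType) (X Y Z : V) : X + Y - (X - Z) = Z + Y.
Proof. by rewrite opprB addrC addrA addrNK addrC. Qed.

Unset Implicit Arguments.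

Theorem lemma6p1 (F : fieldType) (p m n ph mh : nat)
  (G : 'M[ratF F]_(p, m)) (D : 'M[{poly F}]_(p, m))
  (A : 'M[F]_n) (B : 'M[F]_(n, m)) (C : 'M[F]_(p, n))
  (K1 : 'M[{poly F}]_(mh, m + mh)) (K2 : 'M[{poly F}]_(ph, p + ph))
  (N1 : 'M[{poly F}]_(m, m + mh)) (N2 : 'M[{poly F}]_(p, p + ph))
  (M : 'M[{poly F}]_(p + ph, m + mh))
  (K1h : 'M[F]_(m, m + mh)) (K2h : 'M[F]_(p, p + ph))
  (N1h : 'M[{poly F}]_(mh, m + mh)) (N2h : 'M[{poly F}]_(ph, p + ph))
  (T S : 'M[F]_n)
  (hG : G = mxQ D + ssreal A B C)
  (hmin : minimal_realization A B C)
  (hdegD : (1 < pmxdeg D)%N)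
  (hK1 : minimal_basis K1) (hK1deg : forall i, rowdeg K1 i = 1%N)
  (hK2 : minimal_basis K2) (hK2deg : forall i, rowdeg K2 i = 1%N)
  (hdual1 : dual_minimal_bases K1 N1) (hdual2 : dual_minimal_bases K2 N2)
  (hN1deg : exists d, forall i, rowdeg N1 i = d)
  (hN2deg : exists d, forall i, rowdeg N2 i = d)
  (hMpencil : (pmxdeg M <= 1)%N)
  (hD : D = N2 *m M *m N1^T)
  (hdegD' : pmxdeg D = (pmxdeg N1 + pmxdeg N2 + 1)%N)
  (hU1 : unimodular_completion K1 K1h N1h N1)
  (hU2 : unimodular_completion K2 K2h N2h N2)
  (hT : T \in unitmx) (hS : S \in unitmx) :
  (forall h : 'cV[ratF F]_m, G *m h = 0 ->
     Ghat A B C M K1 K2 K1h K2h *m (mxQ (Zmx M N1 N2h) *m h) = 0) /\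
  (forall h : 'cV[{poly F}]_m, G *m mxQ h = 0 -> h != 0 ->
     exists z : 'cV[{poly F}]_(m + mh + ph),
       [/\ mxQ z = mxQ (Zmx M N1 N2h) *m mxQ h,
           pmxdeg z = pmxdeg (N1^T *m h) &
           pmxdeg (N1^T *m h) = (pmxdeg N1 + pmxdeg h)%N]) /\
  (forall l (H : 'M[{poly F}]_(m, l)),
     right_minimal_basis G H ->
     right_minimal_basis (Ghat A B C M K1 K2 K1h K2h) (Zmx M N1 N2h *m H)).
Proof.
case: hU1 => hU1a hU1b; case: hU2 => hU2a hU2b.
move: hU1a; rewrite mul_col_row scalar_mx_block => /eq_block_mx [U1a U1b U1c U1d].
move: hU2a; rewrite mul_col_row scalar_mx_block => /eq_block_mx [U2a U2b U2c U2d].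
move: hU1b hU2b; rewrite !mul_row_col => U1e U2e.
have Q := fun a b (X Y : 'M[{poly F}]_(a, b)) (e : X = Y) => congr1 (@mxQ F a b) e.
have QT := fun a b (X Y : 'M[{poly F}]_(a, b)) (e : X = Y) => congr1 (@mxQ F b a) (congr1 trmx e).
have R1 : mxQ K1 *m (mxQ N1)^T = 0.
  by have := Q _ _ _ _ U1b; rewrite mxQM mxQT mxQ0.
have R2 : mxFQ K1h *m (mxQ N1)^T = 1%:M.
  by have := Q _ _ _ _ U1d; rewrite mxQM mxQT mxQ1.
have R3 : (mxQ N1h)^T *m mxQ K1 + (mxQ N1)^T *m mxFQ K1h = 1%:M.
  by have := Q _ _ _ _ U1e; rewrite mxQD !mxQM !mxQT mxQ1.
have S1 : mxQ N2 *m (mxQ K2)^T = 0.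
  by have := QT _ _ _ _ U2b; rewrite trmx_mul trmxK trmx0 mxQM mxQT mxQ0.
have S2 : mxQ N2 *m (mxFQ K2h)^T = 1%:M.
  by have := QT _ _ _ _ U2d; rewrite trmx_mul trmxK trmx1 mxQM mxQT mxQ1.
have S3 : mxQ N2h *m (mxQ K2)^T = 1%:M.
  by have := QT _ _ _ _ U2a; rewrite trmx_mul trmxK trmx1 mxQM mxQT mxQ1.
have S4 : mxQ N2h *m (mxFQ K2h)^T = 0.
  by have := QT _ _ _ _ U2c; rewrite trmx_mul trmxK trmx0 mxQM mxQT mxQ0.
have S5 : (mxQ K2)^T *m mxQ N2h + (mxFQ K2h)^T *m mxQ N2 = 1%:M.
  by have := QT _ _ _ _ U2e; rewrite linearD /= !trmx_mul !trmxK trmx1 mxQD !mxQM !mxQT mxQ1.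
set R := ssreal A B C.
set Gh := Ghat A B C M K1 K2 K1h K2h.
set Zq := mxQ (Zmx M N1 N2h).
have ZqE : Zq = col_mx (mxQ N1)^T (- (mxQ N2h *m mxQ M *m (mxQ N1)^T)).
  by rewrite /Zq /Zmx mxQ_col mxQN !mxQM mxQT.
have GhE : Gh = block_mx (mxQ M + (mxFQ K2h)^T *m R *m mxFQ K1h) (mxQ K2)^T (mxQ K1) 0.
  by rewrite /Gh /Ghat mxFQT mxQT.
have hGE : G = mxQ N2 *m mxQ M *m (mxQ N1)^T + R by rewrite hG hD !mxQM mxQT.
have e5 : (mxQ K2)^T *m mxQ N2h = 1%:M - (mxFQ K2h)^T *m mxQ N2 by rewrite -S5 addrK.
have e2 : forall k (X : 'M_(k, m)), X *m mxFQ K1h *m (mxQ N1)^T = X.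
  by move=> k X; rewrite -mulmxA R2 mulmx1.
have F1 : Gh *m Zq = col_mx ((mxFQ K2h)^T *m G) 0.
  rewrite GhE ZqE mul_block_col mul0mx addr0 R1; congr col_mx.
  rewrite hGE mulmxDl mulmxN ?mulmxDr ?mulmxA e2 e5 mulmxBl mul1mx ?mulmxA.
  by rewrite mulmxBl zab.
set Prq : 'M[ratF F]_(m, m + mh + ph) := row_mx (mxFQ K1h) 0.
have F3 : Prq *m Zq = 1%:M by rewrite ZqE mul_row_col mul0mx addr0 R2.
have F2 : forall k (X : 'M_(m + mh + ph, k)), Gh *m X = 0 ->
    X = Zq *m (Prq *m X) /\ G *m (Prq *m X) = 0.
  move=> k X; rewrite -(vsubmxK X); move: (usubmx X) (dsubmx X) => X1 X2 {X} hX.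
  rewrite GhE mul_block_col mul0mx addr0 -col_mx0 in hX.
  case/eq_col_mx: hX => top bot.
  have hE : Prq *m col_mx X1 X2 = mxFQ K1h *m X1 by rewrite mul_row_col mul0mx addr0.
  rewrite hE; set h := mxFQ K1h *m X1.
  have X1E : X1 = (mxQ N1)^T *m h.
    by rewrite /h mulmxA -[X1 in LHS]mul1mx -R3 mulmxDl -mulmxA bot mulmx0 add0r.
  rewrite mulmxDl in top.
  have t2 := congr1 (mulmx (mxQ N2)) top.
  have t3 := congr1 (mulmx (mxQ N2h)) top.
  rewrite mulmx0 !mulmxDr !mulmxA S1 mul0mx addr0 S2 mul1mx in t2.
  rewrite mulmx0 !mulmxDr !mulmxA S3 mul1mx S4 !mul0mx addr0 in t3.
  split.
    rewrite ZqE mul_col_mx -X1E; congr col_mx.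
    rewrite -[X2](addKr (mxQ N2h *m mxQ M *m X1)) t3 addr0 mulNmx.
    by rewrite -!mulmxA -X1E.
  by rewrite hGE mulmxDl -!mulmxA -X1E ?mulmxA /h ?mulmxA.
have Pa1 : forall h : 'cV_m, G *m h = 0 -> Gh *m (Zq *m h) = 0.
  by move=> h hh; rewrite mulmxA F1 mul_col_mx -mulmxA hh mulmx0 mul0mx col_mx0.
case: hN1deg => d1 hd1.
case: hdual1 => _ hN1m _ _.
have DN1 : forall h : 'cV[{poly F}]_m, h != 0 -> pmxdeg (N1^T *m h) = (d1 + pmxdeg h)%N.
  exact: rowred hN1m hd1.
have DK2 : forall y : 'cV[{poly F}]_ph, y != 0 -> pmxdeg (K2^T *m y) = (1 + pmxdeg y)%N.
  exact: rowred hK2 hK2deg.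
have U2t : K2^T *m N2h + (mxFP K2h)^T *m N2 = 1%:M.
  by have := congr1 trmx U2e; rewrite linearD /= !trmx_mul !trmxK trmx1.
have pK2hT : pmxdeg (mxFP K2h)^T = 0%N by rewrite /mxFP map_trmx pmxdegFP.
have DZ : forall h : 'cV[{poly F}]_m, G *m mxQ h = 0 -> h != 0 ->
    pmxdeg (Zmx M N1 N2h *m h) = pmxdeg (N1^T *m h).
  move=> h hh h0.
  rewrite /Zmx mul_col_mx mulNmx pmxdeg_col pmxdegN; apply/maxn_idPl.
  set w := N1^T *m h.
  have hw : pmxdeg w = (d1 + pmxdeg h)%N by exact: DN1.
  have hDh : (pmxdeg (D *m h) <= pmxdeg h)%N.
    by apply: (@real_bound _ n p m A B C); rewrite -hG.
  rewrite -!mulmxA; set y := N2h *m (M *m w).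
  have [->|y0] := eqVneq y 0; first by rewrite pmxdeg0.
  rewrite -(leq_add2l 1) -DK2 //.
  have -> : K2^T *m y = M *m w - (mxFP K2h)^T *m (D *m h).
    rewrite /y mulmxA -[K2^T *m N2h](addrK ((mxFP K2h)^T *m N2)) U2t.
    by rewrite mulmxBl mul1mx hD /w !mulmxA.
  apply: pmxdegD; first by apply: leq_trans (pmxdegM _ _) _; rewrite leq_add2r.
  rewrite pmxdegN; apply: leq_trans (pmxdegM _ _) _; rewrite pK2hT add0n hw.
  by apply: leq_trans hDh _; lia.
  split; first exact: Pa1.
split.
  move=> h hh h0; exists (Zmx M N1 N2h *m h); split; [by rewrite mxQM | exact: DZ | ].
  rewrite DN1 //; congr addn.
  have [i _] := top_coef_nz h0.
  apply/eqP; rewrite eqn_leq; apply/andP; split.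
    by rewrite -(hd1 i); exact: rowdeg_le_pmxdeg.
  by apply/pmxdeg_leP => i' j; rewrite -(hd1 i'); exact: rowdeg_ge.
move=> l H [fH eqH minH].
rewrite /rnull in eqH minH.
have F3t : Zq^T *m Prq^T = 1%:M by rewrite -trmx_mul F3 trmx1.
have Zfree : row_free Zq^T.
  rewrite /row_free eqn_leq rank_leq_row /=.
  by have := mxrankM_maxl Zq^T Prq^T; rewrite F3t mxrank1.
have XG : mxQ H^T *m G^T = 0 by apply/sub_kermxP; rewrite eqH.
have b2 : (mxQ H^T *m Zq^T :=: kermx Gh^T)%MS.
  apply/eqmxP/andP; split.
    apply/sub_kermxP; rewrite -mulmxA -trmx_mul F1 tr_col_mx trmx0 mul_mx_row.
    by rewrite trmx_mul trmxK mulmxA XG mul0mx mulmx0 row_mx0.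
  have HY : Gh *m (kermx Gh^T)^T = 0.
    by have := congr1 trmx (mulmx_ker Gh^T); rewrite trmx_mul trmxK trmx0.
  have [y1 y2] := F2 _ _ HY.
  have YE : kermx Gh^T = (Prq *m (kermx Gh^T)^T)^T *m Zq^T by rewrite -trmx_mul -y1 trmxK.
  rewrite {1}YE; apply: submxMr; rewrite eqH; apply/sub_kermxP.
  by rewrite -trmx_mul y2 trmx0.
rewrite /right_minimal_basis /minimal_basis_of /rnull.
have ZHt : mxQ (Zmx M N1 N2h *m H)^T = mxQ H^T *m Zq^T by rewrite trmx_mul mxQM !mxQT.
rewrite ZHt; split => //; first by rewrite /row_free mxrankMfree.
move=> K' fK' eqK'.
set PrP : 'M[{poly F}]_(m, m + mh + ph) := row_mx (mxFP K1h) 0.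
have PrQ : mxQ PrP = Prq by rewrite /PrP mxQ_row mxQ0.
set H2 := K' *m PrP^T.
have K'G : Gh *m (mxQ K')^T = 0.
  have : (mxQ K' <= kermx Gh^T)%MS by rewrite eqK'.
  by move/sub_kermxP/(congr1 trmx); rewrite trmx_mul trmxK trmx0.
have [k1 k2] := F2 _ _ K'G.
have H2E : mxQ H2 = (Prq *m (mxQ K')^T)^T by rewrite /H2 mxQM mxQT PrQ trmx_mul trmxK.
have K'E : mxQ K' = mxQ H2 *m Zq^T by rewrite H2E -trmx_mul -k1 trmxK.
have fH2 : row_free (mxQ H2).
  rewrite /row_free eqn_leq rank_leq_row /=.
  by have := mxrankM_maxl (mxQ H2) Zq^T; rewrite -K'E (eqP fK').
have eqH2 : (mxQ H2 :=: kermx G^T)%MS.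
  apply/eqmxP/andP; split.
    by apply/sub_kermxP; rewrite H2E -trmx_mul k2 trmx0.
  rewrite -eqH -[mxQ H^T]mulmx1 -F3t mulmxA /H2 mxQM (mxQT PrP) PrQ; apply: submxMr.
  by rewrite b2 eqK'.
have hle := minH H2 fH2 eqH2.
have rowZ : forall j, rowdeg (Zmx M N1 N2h *m H)^T j = (d1 + rowdeg H^T j)%N.
  move=> j; rewrite !rowdegE trmx_mul row_mul trmx_mul trmxK.
  have hj0 : (row j H^T)^T != 0 by apply: rowT_nz.
  rewrite DZ // ?DN1 //.
  have rowQ : mxQ (row j H^T) = row j (mxQ H^T) by rewrite /mxQ map_row.
  by apply: (can_inj (@trmxK _ _ _)); rewrite trmx0 trmx_mul mxQT trmxK rowQ -row_mul XG row0.
have rowK : forall j, (d1 + rowdeg H2 j <= rowdeg K' j)%N.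
  move=> j; rewrite !rowdegE.
  have eK : (row j K')^T = Zmx M N1 N2h *m (row j H2)^T.
    apply: mxQ_inj; rewrite !mxQM !mxQT /mxQ !map_row -!/(mxQ _) K'E row_mul.
    by rewrite trmx_mul trmxK.
  rewrite eK /Zmx mul_col_mx pmxdeg_col -DN1; first exact: leq_maxl.
  exact: rowT_nz.
rewrite /totdeg (eq_bigr _ (fun j _ => rowZ j)) big_split /=.
apply: leq_trans (_ : _ <= \sum_(i < l) (d1 + rowdeg H2 i))%N _.
  by rewrite big_split /= leq_add2l.
by apply: leq_sum => j _; exact: rowK.
Qed.
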